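(* Let $\mathbb X$ be a basic space and $\mathcal D=(D,<,\rho)$ a computable partially ordered set. 1. All functions in $\mathrm{Max}_{\mathrm{PR}}[\mathbb X\to\mathcal D]$ and in $\mathrm{Min}_{\mathrm{PR}}[\mathbb X\to\mathcal D]$ are partial computable relative to the oracle $\emptyset'$. In particular, $K^D$ is computable in $\emptyset'$. 2. $K^{\mathcal D}_{\min}$ and $K^{\mathcal D}_{\max}$ are computable in $\emptyset'$.
   Context: $\emptyset'$ denotes the halting set. A basic space is a finite non-empty product of sets each of which is $\mathbb N$, $\mathbb Z$, or $A^*$ for some finite alphabet $A$. A computable partially ordered set is a triple $\mathcal D=(D,<,\rho)$ where $\rho:\mathbb N\to D$ is a bijection and $<$ is a strict partial order on $D$ with $\{(m,n):\rho(m)<\rho(n)\}$ computable; computability of maps into $D$ (possibly relative to an oracle) is via $\rho^{-1}$. For a partial $f:\mathbb X\times\mathbb N\to D$ monotone increasing (resp. decreasing) in its second argument on its domain, $\max^{\mathcal D}f$ (resp. $\min^{\mathcal D}f$) is the partial function defined exactly at those $x$ for which $\{f(x,t):t,\ f(x,t)\text{ defined}\}$ is finite and non-empty, with value its maximum (resp. minimum). $\mathrm{Max}_{\mathrm{PR}}[\mathbb X\to\mathcal D]$ (resp. $\mathrm{Min}_{\mathrm{PR}}[\mathbb X\to\mathcal D]$) is the class of all $\max^{\mathcal D}f$ (resp. $\min^{\mathcal D}f$) with $f$ partial computable and monotone increasing (resp. decreasing) in its second argument. For partial $\varphi:\{0,1\}^*\to D$, $K_\varphi(d)=\min\{|p|:\varphi(p)=d\}$.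 $K^D$ is $K_\varphi$ for $\varphi$ optimal among partial computable functions $\{0,1\}^*\to D$ (for every partial computable $\psi$, $K_\varphi\le K_\psi+c$ wherever $K_\psi$ is defined, for some $c$). $K^{\mathcal D}_{\max}$ is $K_U$ for some fixed $U$ optimal in the same sense within $\mathrm{Max}_{\mathrm{PR}}[\{0,1\}^*\to\mathcal D]$, and $K^{\mathcal D}_{\min}$ is $K^{\mathcal D'}_{\max}$ for the reverse order $\mathcal D'=(D,>,\rho)$. *)

(* Defs.v *)
From mathcomp Require Import all_boot.
From mathcomp Require Import all_algebra.
From Stdlib Require List.

Set Implicit Arguments.
Unset Strict Implicit.
Unset Printing Implicit Defensive.

Inductive prog : Type :=
| PZero
| PSucc
| PProj of nat
| POracle
| PComp of prog & seq prog
| PRec of prog & prog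
| PMu of prog.

(* Big-step semantics relative to an oracle O : nat -> Prop.  Programs are
   applied to argument lists; missing arguments default to 0. *)
Inductive eval (O : nat -> Prop) : prog -> seq nat -> nat -> Prop :=
| ev_zero v : eval O PZero v 0
| ev_succ v : eval O PSucc v (head 0 v).+1
| ev_proj i v : eval O (PProj i) v (nth 0 v i)
| ev_orac1 v : O (head 0 v) -> eval O POracle v 1
| ev_orac0 v : ~ O (head 0 v) -> eval O POracle v 0
| ev_comp f gs v ws y :
    evals O gs v ws -> eval O f ws y -> eval O (PComp f gs) v y
| ev_rec0 f g v y : eval O f v y -> eval O (PRec f g) (0 :: v) y
| ev_recS f g n v z y :
    eval O (PRec f g) (n :: v) z -> eval O g (n :: z :: v) y ->
    eval O (PRec f g) (n.+1 :: v) y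
| ev_mu f v n :
    eval O f (n :: v) 0 ->
    (forall m, m < n -> exists k, 0 < k /\ eval O f (m :: v) k) ->
    eval O (PMu f) v n
with evals (O : nat -> Prop) : seq prog -> seq nat -> seq nat -> Prop :=
| evs_nil v : evals O [::] v [::]
| evs_cons g gs v w ws :
    eval O g v w -> evals O gs v ws -> evals O (g :: gs) v (w :: ws).

Definition no_oracle : nat -> Prop := fun _ => False.

Fixpoint prog_code (p : prog) : nat :=
  match p with
  | PZero => CodeSeq.code [:: 0]
  | PSucc => CodeSeq.code [:: 1]
  | PProj i => CodeSeq.code [:: 2; i]
  | POracle => CodeSeq.code [:: 3]
  | PComp f gs => CodeSeq.code [:: 4; prog_code f; CodeSeq.code (map prog_code gs)]
  | PRec f g => CodeSeq.code [:: 5; prog_code f; prog_code g]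
  | PMu f => CodeSeq.code [:: 6; prog_code f]
  end.

Definition halting_set : nat -> Prop :=
  fun e => exists p, prog_code p = e /\ exists y, eval no_oracle p [:: e] y.

(* A partial function A -> B is given by its graph F : A -> B -> Prop.  *)

Definition pc_rel (O : nat -> Prop) (A B : Type) (encA : A -> nat) (encB : B -> nat)
    (F : A -> B -> Prop) : Prop :=
  exists p : prog,
    (forall a b, eval O p [:: encA a] (encB b) <-> F a b) /\
    (forall a m, eval O p [:: encA a] m -> exists b, m = encB b).

Definition graph (A B : Type) (f : A -> option B) : A -> B -> Prop :=
  fun a b => f a = Some b.

(* Basic spaces: finite non-empty products of N, Z, A^* (A finite).     *)

Inductive comp : Type := cN | cZ | cW of nat.

Definition comp_type (c : comp) : Type :=
  match c with cN => nat | cZ => int | cW k => seq 'I_k end.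

Definition int_code (z : int) : nat :=
  match z with Posz n => n.*2 | Negz n => n.*2.+1 end.

Definition comp_code (c : comp) : comp_type c -> nat :=
  match c return comp_type c -> nat with
  | cN => fun n => n
  | cZ => int_code
  | cW k => fun w => CodeSeq.code (map (@nat_of_ord k) w)
  end.

Record bspace : Type := BSpace { bs_head : comp; bs_tail : seq comp }.

Fixpoint bs_type_aux (c : comp) (cs : seq comp) : Type :=
  match cs with
  | [::] => comp_type c
  | c' :: cs' => (comp_type c * bs_type_aux c' cs')%type
  end.

Fixpoint bs_codes_aux (c : comp) (cs : seq comp) : bs_type_aux c cs -> seq nat :=
  match cs return bs_type_aux c cs -> seq nat with
  | [::] => fun x => [:: comp_code x]
  | c' :: cs' => fun x => comp_code x.1 :: bs_codes_aux x.2
  end.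

Definition bs_type (X : bspace) : Type := bs_type_aux (bs_head X) (bs_tail X).
Definition bs_code (X : bspace) (x : bs_type X) : nat := CodeSeq.code (bs_codes_aux x).

Definition bits : bspace := BSpace (cW 2) [::].

Definition pair_code (X : bspace) (xt : bs_type X * nat) : nat :=
  CodeSeq.code [:: bs_code xt.1; xt.2].

Definition computable_poset (D : Type) (lt : D -> D -> Prop)
    (rho : nat -> D) (rhoinv : D -> nat) : Prop :=
  [/\ cancel rho rhoinv, cancel rhoinv rho,
      (forall d, ~ lt d d),
      (forall a b c, lt a b -> lt b c -> lt a c) &
      exists p : prog, forall m n,
        (eval no_oracle p [:: m; n] 1 <-> lt (rho m) (rho n)) /\
        (eval no_oracle p [:: m; n] 0 <-> ~ lt (rho m) (rho n))].

Definition le_of (D : Type) (lt : D -> D -> Prop) (a b : D) : Prop := a = b \/ lt a b.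

Definition pc_fun2 (X : bspace) (D : Type) (rhoinv : D -> nat)
    (f : bs_type X -> nat -> option D) : Prop :=
  pc_rel no_oracle (@pair_code X) rhoinv (fun xt d => f xt.1 xt.2 = Some d).

Definition mono_inc (A D : Type) (lt : D -> D -> Prop) (f : A -> nat -> option D) : Prop :=
  forall x t t' d d', t <= t' -> f x t = Some d -> f x t' = Some d' -> le_of lt d d'.

Definition mono_dec (A D : Type) (lt : D -> D -> Prop) (f : A -> nat -> option D) : Prop :=
  forall x t t' d d', t <= t' -> f x t = Some d -> f x t' = Some d' -> le_of lt d' d.

Definition finite_values (A D : Type) (f : A -> nat -> option D) (x : A) : Prop :=
  exists l : list D, forall t d, f x t = Some d -> List.In d l.

Definition max_graph (A D : Type) (lt : D -> D -> Prop) (f : A -> nat -> option D)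
    : A -> D -> Prop :=
  fun x d => finite_values f x /\ (exists t, f x t = Some d) /\
             (forall t d', f x t = Some d' -> le_of lt d' d).

Definition min_graph (A D : Type) (lt : D -> D -> Prop) (f : A -> nat -> option D)
    : A -> D -> Prop :=
  fun x d => finite_values f x /\ (exists t, f x t = Some d) /\
             (forall t d', f x t = Some d' -> le_of lt d d').

Definition in_MaxPR (X : bspace) (D : Type) (lt : D -> D -> Prop) (rhoinv : D -> nat)
    (g : bs_type X -> D -> Prop) : Prop :=
  exists f, pc_fun2 rhoinv f /\ mono_inc lt f /\
            forall x d, g x d <-> max_graph lt f x d.

Definition in_MinPR (X : bspace) (D : Type) (lt : D -> D -> Prop) (rhoinv : D -> nat)
    (g : bs_type X -> D -> Prop) : Prop :=
  exists f, pc_fun2 rhoinv f /\ mono_dec lt f /\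
            forall x d, g x d <-> min_graph lt f x d.

Definition K_graph (D : Type) (phi : bs_type bits -> D -> Prop) : D -> nat -> Prop :=
  fun d n => (exists p, size p = n /\ phi p d) /\ (forall p, phi p d -> n <= size p).

Definition optimal_in (D : Type) (C : (bs_type bits -> D -> Prop) -> Prop)
    (phi : bs_type bits -> D -> Prop) : Prop :=
  forall psi, C psi -> exists c, forall d n, K_graph psi d n ->
     exists m, K_graph phi d m /\ m <= n + c.

Definition PC_bits (D : Type) (rhoinv : D -> nat) (phi : bs_type bits -> D -> Prop) : Prop :=
  pc_rel no_oracle (@bs_code bits) rhoinv phi.

(* Main.v *)
Require Import Defs.
From mathcomp Require Import all_boot.
From mathcomp Require Import zify.
From Stdlib Require List.
From Stdlib Require Import ClassicalEpsilon.
Set Implicit Arguments.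
Unset Strict Implicit.
Unset Printing Implicit Defensive.

Definition prog_ind2 (P : prog -> Prop)
 (H0 : P PZero) (H1 : P PSucc) (H2 : forall i, P (PProj i)) (H3 : P POracle)
 (H4 : forall f gs, P f -> List.Forall P gs -> P (PComp f gs))
 (H5 : forall f g, P f -> P g -> P (PRec f g))
 (H6 : forall f, P f -> P (PMu f)) : forall p, P p :=
 fix F p := match p with
 | PZero => H0 | PSucc => H1 | PProj i => H2 i | POracle => H3
 | PComp f gs => @H4 f gs (F f) ((fix G l : List.Forall P l := match l with
       [::] => List.Forall_nil _ | g :: l' => List.Forall_cons _ (F g) (G l') end) gs)
 | PRec f g => @H5 f g (F f) (F g)
 | PMu f => @H6 f (F f)
 end.

Lemma evals_det O gs :
  List.Forall (fun g => forall v y1 y2, eval O g v y1 -> eval O g v y2 -> y1 = y2) gs ->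
  forall v ws1 ws2, evals O gs v ws1 -> evals O gs v ws2 -> ws1 = ws2.
Proof.
elim: gs => [|g gs IH] Hgs v ws1 ws2 E1 E2.
  by inversion E1; inversion E2.
inversion E1; inversion E2; subst; inversion Hgs; subst.
match goal with H : forall v y1 y2, _ , A : eval _ g _ ?a, B : eval _ g _ ?b |- _ =>
  rewrite (H _ _ _ A B) end.
match goal with A : evals _ gs _ ?a, B : evals _ gs _ ?b, H : List.Forall _ gs |- _ =>
  by rewrite (IH H _ _ _ A B) end.
Qed.

Lemma eval_det O : forall p v y1 y2, eval O p v y1 -> eval O p v y2 -> y1 = y2.
Proof.
elim/prog_ind2.
- by move=> v y1 y2 H1 H2; inversion H1; inversion H2.
- by move=> v y1 y2 H1 H2; inversion H1; inversion H2.
- by move=> i v y1 y2 H1 H2; inversion H1; inversion H2.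
- move=> v y1 y2 H1 H2; inversion H1; inversion H2; subst => //; contradiction.
- move=> f gs IHf IHgs v y1 y2 H1 H2; inversion H1; inversion H2; subst.
  match goal with A : evals _ gs _ ?a, B : evals _ gs _ ?b |- _ =>
    have E := evals_det IHgs A B end; subst.
  match goal with A : eval _ f _ y1, B : eval _ f _ y2 |- _ => exact: IHf A B end.
- move=> f g IHf IHg [|n v] y1 y2 H1 H2; first by inversion H1.
  elim: n y1 y2 H1 H2 => [|n IH] y1 y2 H1 H2; inversion H1; inversion H2; subst.
    match goal with A : eval _ f _ y1, B : eval _ f _ y2 |- _ => exact: IHf A B end.
  match goal with A : eval _ (PRec f g) _ ?a, B : eval _ (PRec f g) _ ?b |- _ =>
    have Ez := IH _ _ A B end; subst.
  match goal with A : eval _ g _ y1, B : eval _ g _ y2 |- _ => exact: IHg A B end.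
- move=> f IHf v y1 y2 H1 H2; inversion H1 as [| | | | | | | | ff vv n1 A1 B1]; inversion H2 as [| | | | | | | | ff2 vv2 n2 A2 B2]; subst.
  case: (ltngtP y1 y2) => // Hlt.
  + have [k [Hk Ek]] := B2 _ Hlt. by have := IHf _ _ _ A1 Ek => E; rewrite -E in Hk.
  + have [k [Hk Ek]] := B1 _ Hlt. by have := IHf _ _ _ A2 Ek => E; rewrite -E in Hk.
Qed.

Fixpoint recf (a : nat) (G : nat -> nat -> nat) (n : nat) : nat :=
  if n is j.+1 then G j (recf a G j) else a.

Lemma ev_rec O f g v a G n :
  eval O f v a -> (forall j z, eval O g [:: j, z & v] (G j z)) ->
  eval O (PRec f g) (n :: v) (recf a G n).
Proof.
move=> hf hg; elim: n => [|n IH] /=; first exact: ev_rec0.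
exact: ev_recS IH (hg _ _).
Qed.

Definition ap1 F P := PComp F [:: P].
Definition ap2 F P Q := PComp F [:: P; Q].
Definition ap3 F P Q R := PComp F [:: P; Q; R].

Lemma ev_ap1 O F P v a y : eval O P v a -> eval O F [:: a] y -> eval O (ap1 F P) v y.
Proof. move=> hP hF; apply: ev_comp hF; constructor => //; constructor. Qed.
Lemma ev_ap2 O F P Q v a b y : eval O P v a -> eval O Q v b ->
  eval O F [:: a; b] y -> eval O (ap2 F P Q) v y.
Proof. move=> hP hQ hF; apply: ev_comp hF; do 2 constructor => //; constructor. Qed.
Lemma ev_ap3 O F P Q R v a b c y : eval O P v a -> eval O Q v b -> eval O R v c ->
  eval O F [:: a; b; c] y -> eval O (ap3 F P Q R) v y.
Proof. move=> hP hQ hR hF; apply: ev_comp hF; do 3 constructor => //; constructor. Qed.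

Fixpoint cst n := if n is m.+1 then ap1 PSucc (cst m) else PZero.
Lemma ev_cst O n v : eval O (cst n) v n.
Proof. elim: n => [|n IH] /=; [constructor | apply: ev_ap1 IH _; constructor]. Qed.

Lemma ev_proj O i v : eval O (PProj i) v (nth 0 v i).
Proof. constructor. Qed.

Definition csucc P := ap1 PSucc P.
Lemma ev_csucc O P v a : eval O P v a -> eval O (csucc P) v a.+1.
Proof. move=> h; apply: ev_ap1 h _; exact: ev_succ. Qed.

Definition ADD := PRec (PProj 0) (csucc (PProj 1)).
Lemma ev_ADD O a b : eval O ADD [:: a; b] (a + b).
Proof.
have -> : a + b = recf b (fun _ z => z.+1) a by elim: a => //= a <-; rewrite addSn.
apply: ev_rec; first exact: ev_proj.
move=> j z; exact: ev_csucc (ev_proj _ _ _).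
Qed.
Definition cadd P Q := ap2 ADD P Q.
Lemma ev_cadd O P Q v a b : eval O P v a -> eval O Q v b -> eval O (cadd P Q) v (a + b).
Proof. move=> hP hQ; exact: ev_ap2 hP hQ (ev_ADD _ _ _). Qed.

Definition MUL := PRec PZero (cadd (PProj 1) (PProj 2)).
Lemma ev_MUL O a b : eval O MUL [:: a; b] (a * b).
Proof.
have -> : a * b = recf 0 (fun _ z => z + b) a by elim: a => //= a <-; rewrite mulSn addnC.
apply: ev_rec; first constructor.
move=> j z; exact: ev_cadd (ev_proj _ _ _) (ev_proj _ _ _).
Qed.
Definition cmul P Q := ap2 MUL P Q.
Lemma ev_cmul O P Q v a b : eval O P v a -> eval O Q v b -> eval O (cmul P Q) v (a * b).
Proof. move=> hP hQ; exact: ev_ap2 hP hQ (ev_MUL _ _ _). Qed.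

Definition POW2 := PRec (cst 1) (cadd (PProj 1) (PProj 1)).
Lemma ev_POW2 O a : eval O POW2 [:: a] (2 ^ a).
Proof.
have -> : 2 ^ a = recf 1 (fun _ z => z + z) a by elim: a => //= a <-; rewrite expnS mul2n addnn.
apply: ev_rec; first exact: ev_cst.
move=> j z; exact: ev_cadd (ev_proj _ _ _) (ev_proj _ _ _).
Qed.
Definition cpow2 P := ap1 POW2 P.
Lemma ev_cpow2 O P v a : eval O P v a -> eval O (cpow2 P) v (2 ^ a).
Proof. move=> hP; exact: ev_ap1 hP (ev_POW2 _ _). Qed.

Definition PRED := PRec PZero (PProj 0).
Lemma ev_PRED O a : eval O PRED [:: a] a.-1.
Proof.
have -> : a.-1 = recf 0 (fun j _ => j) a by case: a.
apply: ev_rec; [constructor | move=> j z; exact: ev_proj].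
Qed.
Definition cpred P := ap1 PRED P.
Lemma ev_cpred O P v a : eval O P v a -> eval O (cpred P) v a.-1.
Proof. move=> hP; exact: ev_ap1 hP (ev_PRED _ _). Qed.

Definition SUBR := PRec (PProj 0) (cpred (PProj 1)).
Lemma ev_SUBR O a b : eval O SUBR [:: a; b] (b - a).
Proof.
have -> : b - a = recf b (fun _ z => z.-1) a by elim: a => //= [|a <-]; rewrite ?subn0 ?subnS.
apply: ev_rec; [exact: ev_proj | move=> j z; exact: ev_cpred (ev_proj _ _ _)].
Qed.
Definition csub P Q := ap2 SUBR Q P.
Lemma ev_csub O P Q v a b : eval O P v a -> eval O Q v b -> eval O (csub P Q) v (a - b).
Proof. move=> hP hQ; exact: ev_ap2 hQ hP (ev_SUBR _ _ _). Qed.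

Definition ISZ := PRec (cst 1) PZero.
Lemma ev_ISZ O a : eval O ISZ [:: a] (a == 0).
Proof.
have -> : nat_of_bool (a == 0) = recf 1 (fun _ _ => 0) a by case: a.
apply: ev_rec; [exact: ev_cst | move=> j z; constructor].
Qed.
Definition cisz P := ap1 ISZ P.
Lemma ev_cisz O P v a : eval O P v a -> eval O (cisz P) v (a == 0).
Proof. move=> hP; exact: ev_ap1 hP (ev_ISZ _ _). Qed.

Definition COND := PRec (PProj 0) (PProj 3).
Lemma ev_COND O a b c : eval O COND [:: a; b; c] (if a is 0 then b else c).
Proof.
have -> : (if a is 0 then b else c) = recf b (fun _ _ => c) a by case: a.
apply: ev_rec; [exact: ev_proj | move=> j z; exact: ev_proj].
Qed.
Definition cif P Q R := ap3 COND P Q R.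
Lemma ev_cif O P Q R v a b c : eval O P v a -> eval O Q v b -> eval O R v c ->
  eval O (cif P Q R) v (if a is 0 then b else c).
Proof. move=> hP hQ hR; exact: ev_ap3 hP hQ hR (ev_COND _ _ _ _). Qed.

Definition ceq P Q := cisz (cadd (csub P Q) (csub Q P)).
Lemma ev_ceq O P Q v a b : eval O P v a -> eval O Q v b -> eval O (ceq P Q) v (a == b).
Proof.
move=> hP hQ; have := ev_cisz (ev_cadd (ev_csub hP hQ) (ev_csub hQ hP)).
by rewrite addn_eq0 !subn_eq0 -eqn_leq.
Qed.

Definition projs a k := [seq PProj i | i <- iota a k].
Lemma evs_projs O a k v : evals O (projs a k) v [seq nth 0 v i | i <- iota a k].
Proof. elim: k a => [|k IH] a /=; constructor; [exact: ev_proj | exact: IH]. Qed.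
Lemma map_nth_iota (pre ps : seq nat) :
  [seq nth 0 (pre ++ ps) i | i <- iota (size pre) (size ps)] = ps.
Proof.
rewrite -[in RHS](take_size ps) -[in RHS](map_nth_iota0 0 (leqnn (size ps))).
rewrite -[size pre]addn0 iotaDl -map_comp; apply: eq_map => i /=.
by rewrite nth_cat ltnNge leq_addr /= addKn.
Qed.
Lemma evs_projs' O pre ps : evals O (projs (size pre) (size ps)) (pre ++ ps) ps.
Proof. by have := evs_projs O (size pre) (size ps) (pre ++ ps); rewrite map_nth_iota. Qed.

Fixpoint allsome (l : seq (option nat)) : option (seq nat) :=
  match l with
  | [::] => Some [::]
  | o :: l' => match o, allsome l' with Some y, Some ys => Some (y :: ys) | _, _ => None end
  end.

Fixpoint orec (a : option nat) (G : nat -> nat -> option nat) n :=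
  if n is j.+1 then obind (G j) (orec a G j) else a.

Fixpoint scan (h : nat -> option nat) j : nat :=
  if j is j'.+1 then
    (let r := scan h j' in
     if r is 0 then (match h j' with None => 1 | Some 0 => j'.+2 | Some _ => 0 end) else r)
  else 0.

Fixpoint I (s : nat) (p : prog) (v : seq nat) {struct p} : option nat :=
  match p with
  | PZero => Some 0
  | PSucc => Some (head 0 v).+1
  | PProj i => Some (nth 0 v i)
  | POracle => Some 0
  | PComp f gs => obind (I s f) (allsome (map (fun g => I s g v) gs))
  | PRec f g => if v is n :: v' then orec (I s f v') (fun j z => I s g [:: j, z & v']) n
                else None
  | PMu f => if scan (fun m => I s f (m :: v)) s is m.+2 then Some m else None
  end.

Lemma scan0 h j : scan h j = 0 <-> (forall i, i < j -> exists a, h i = Some a.+1).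
Proof.
elim: j => [|j IH] /=; first by split => // _ i.
case E: (scan h j) => [|r].
  have IH' := proj1 IH E.
  case Ehj: (h j) => [[|a]|]; split => //.
  - move=> H; have [a Ha] := H j (ltnSn _); by rewrite Ehj in Ha.
  - move=> _ i; rewrite ltnS leq_eqVlt => /orP [/eqP -> | /IH'] //; by exists a.
  - move=> H; have [a Ha] := H j (ltnSn _); by rewrite Ehj in Ha.
split => // H; have : scan h j = 0 by apply/IH => i Hi; apply: H; exact: ltnW.
by rewrite E.
Qed.

Lemma scanP h j m : scan h j = m.+2 <->
  [/\ m < j, h m = Some 0 & forall i, i < m -> exists a, h i = Some a.+1].
Proof.
elim: j => [|j IH] /=; first by split => // -[].
case E: (scan h j) => [|r].
  have Z := proj1 (scan0 h j) E.
  case Ehj: (h j) => [[|a]|]; split => //.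
  - case=> <-; split => //.
  - case; rewrite ltnS leq_eqVlt => /orP [/eqP -> //|Hm Hh _].
    by have [a Ha] := Z _ Hm; rewrite Hh in Ha.
  - case; rewrite ltnS leq_eqVlt => /orP [/eqP -> //|Hm Hh _]; first by rewrite Ehj.
    by have [b Hb] := Z _ Hm; rewrite Hh in Hb.
  - case; rewrite ltnS leq_eqVlt => /orP [/eqP -> //|Hm Hh _]; first by rewrite Ehj.
    by have [b Hb] := Z _ Hm; rewrite Hh in Hb.
rewrite -E; split.
  by move/IH => [H1 H2 H3]; split => //; exact: ltnW.
case; rewrite ltnS leq_eqVlt => /orP [/eqP ->|Hm] Hh Hi; last by apply/IH.
have : scan h j = 0 by apply/scan0.
by rewrite E.
Qed.

Definition oleq (o o' : option nat) := forall y, o = Some y -> o' = Some y.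

Lemma orec_mono a a' G G' n : oleq a a' -> (forall j z, oleq (G j z) (G' j z)) ->
  oleq (orec a G n) (orec a' G' n).
Proof.
move=> ha hG; elim: n => [|n IH] //= y.
case E: (orec a G n) => [z|] //= Hz.
by rewrite (IH _ E) /=; exact: hG.
Qed.

Lemma I_mono s s' p : s <= s' -> forall v, oleq (I s p v) (I s' p v).
Proof.
move=> ss'; elim/prog_ind2: p.
- by move=> v y /= ->.
- by move=> v y /= ->.
- by move=> i v y /= ->.
- by move=> v y /= ->.
- move=> f gs IHf IHgs v y /=.
  case E: (allsome _) => [ws|] //= Hy.
  suff -> : allsome [seq I s' g v | g <- gs] = Some ws by exact: IHf.
  elim: gs IHgs ws E {IHf Hy} => [|g gs IH] Hgs ws //=.
  inversion Hgs; subst.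
  case E1: (I s g v) => [w|] //; case E2: (allsome _) => [ws'|] // [<-].
  by rewrite (H1 _ _ E1) (IH H2 _ E2).
- move=> f g IHf IHg [|n v] //=.
  apply: orec_mono => //; move=> j z; exact: IHg.
- move=> f IHf v y /=.
  case E: (scan _ s) => [|[|m]] // [<-].
  move/scanP: E => [H1 H2 H3].
  suff -> : scan (fun m0 => I s' f (m0 :: v)) s' = m.+2 by [].
  apply/scanP; split.
  + exact: leq_trans H1 ss'.
  + exact: IHf.
  + move=> i /H3 [a Ha]; exists a; exact: IHf.
Qed.

Lemma I_sound s p : forall v y, I s p v = Some y -> eval no_oracle p v y.
Proof.
elim/prog_ind2: p.
- move=> v y [<-]; constructor.
- move=> v y [<-]; constructor.
- move=> i v y [<-]; constructor.
- move=> v y [<-]; constructor; by [].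
- move=> f gs IHf IHgs v y /=.
  case E: (allsome _) => [ws|] //= Hy.
  apply: ev_comp (IHf _ _ Hy).
  elim: gs IHgs ws E {IHf Hy} => [|g gs IH] Hgs ws /=.
    by move=> [<-]; constructor.
  inversion Hgs; subst.
  case E1: (I s g v) => [w|] //; case E2: (allsome _) => [ws'|] // [<-].
  constructor; [exact: H1 | exact: IH].
- move=> f g IHf IHg [|n v] //= y.
  elim: n y => [|n IH] y /=; first by move=> H; constructor; exact: IHf.
  case E: (orec _ _ n) => [z|] //= Hy.
  apply: ev_recS (IH _ E) _; exact: IHg.
- move=> f IHf v y /=.
  case E: (scan _ s) => [|[|m]] // [<-].
  move/scanP: E => [H1 H2 H3].
  constructor; first exact: IHf.
  move=> i /H3 [a Ha]; exists a.+1; split => //; exact: IHf.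
Qed.

Lemma bound_exists (Q : nat -> nat -> Prop) n :
  (forall m s s', s <= s' -> Q m s -> Q m s') ->
  (forall m, m < n -> exists s, Q m s) -> exists S, forall m, m < n -> Q m S.
Proof.
move=> Hm; elim: n => [|n IH] H; first by exists 0.
have [S1 HS1] : exists S, forall m, m < n -> Q m S by apply: IH => m Hm'; apply: H; exact: ltnW.
have [S2 HS2] := H n (ltnSn _).
exists (maxn S1 S2) => m; rewrite ltnS leq_eqVlt => /orP [/eqP ->|Hlt].
  apply: Hm HS2; exact: leq_maxr.
apply: Hm (HS1 _ Hlt); exact: leq_maxl.
Qed.

Lemma allsome_mono s s' gs v ws : s <= s' ->
  allsome [seq I s g v | g <- gs] = Some ws -> allsome [seq I s' g v | g <- gs] = Some ws.
Proof.
move=> ss'; elim: gs ws => [|g gs IH] ws //=.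
case E1: (I s g v) => [w|] //; case E2: (allsome _) => [ws'|] // [<-].
by rewrite (I_mono ss' E1) (IH _ E2).
Qed.

Lemma allsome_complete gs v ws :
  List.Forall (fun g => forall v y, eval no_oracle g v y -> exists s, I s g v = Some y) gs ->
  evals no_oracle gs v ws -> exists s, allsome [seq I s g v | g <- gs] = Some ws.
Proof.
elim: gs ws => [|g gs IH] ws Hgs A.
  inversion A; by exists 0.
inversion Hgs as [|g0 gs0 Hg Hgs']; subst.
inversion A as [|g1 gs1 v1 w ws' Ew Ews]; subst.
have [t1 Ht1] := Hg _ _ Ew.
have [t2 Ht2] := IH _ Hgs' Ews.
exists (maxn t1 t2) => /=.
by rewrite (I_mono (leq_maxl t1 t2) Ht1) (allsome_mono (leq_maxr t1 t2) Ht2).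
Qed.

Lemma I_complete p : forall v y, eval no_oracle p v y -> exists s, I s p v = Some y.
Proof.
elim/prog_ind2: p.
- move=> v y H; inversion H; by exists 0.
- move=> v y H; inversion H; by exists 0.
- move=> i v y H; inversion H; by exists 0.
- move=> v y H; inversion H; subst => //; by exists 0.
- move=> f gs IHf IHgs v y H.
  inversion H as [| | | | |ff gg vv ws yy A B| | |]; subst.
  have [s1 Hs1] := IHf _ _ B.
  have [s2 Hs2] := allsome_complete IHgs A.
  exists (maxn s1 s2) => /=.
  rewrite (allsome_mono (leq_maxr s1 s2) Hs2) /=.
  exact: I_mono (leq_maxl _ _) _ _ Hs1.
- move=> f g IHf IHg [|n v] y H; first by inversion H.
  elim: n y H => [|n IH] y H; inversion H; subst.
    match goal with B : eval _ f _ _ |- _ => have [s Hs] := IHf _ _ B end.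
    by exists s.
  match goal with B : eval _ (PRec f g) _ ?z, C : eval _ g _ _ |- _ =>
    have [s1 Hs1] := IH _ B; have [s2 Hs2] := IHg _ _ C end.
  exists (maxn s1 s2) => /=.
  have hm : forall p w, oleq (I s1 p w) (I (maxn s1 s2) p w).
    move=> p w; exact: (@I_mono s1 (maxn s1 s2) p (leq_maxl s1 s2) w).
  have := orec_mono (n := n) (hm f v) (fun j z => hm g [:: j, z & v]) Hs1 => /= ->.
  exact: I_mono (leq_maxr _ _) _ _ Hs2.
- move=> f IHf v y H.
  inversion H as [| | | | | | | | ff vv n A1 B1]; subst.
  have [s0 Hs0] := IHf _ _ A1.
  have [S HS] : exists S, forall m, m < y -> exists a, I S f (m :: v) = Some a.+1.
    apply: bound_exists.
      move=> m s s' ss' [a Ha]; exists a; exact: I_mono ss' _ _ Ha.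
    move=> m /B1 [[|k] [Hk Ek]] //; have [s Hs] := IHf _ _ Ek; by exists s, k.
  exists (maxn (maxn s0 S) y.+1) => /=.
  set T := maxn _ _.
  have h1 : s0 <= T by rewrite /T !leq_max leqnn.
  have h2 : S <= T by rewrite /T !leq_max leqnn orbT.
  have h3 : y < T by rewrite /T !leq_max leqnn orbT.
  suff -> : scan (fun m => I T f (m :: v)) T = y.+2 by [].
  apply/scanP; split => //; first exact: I_mono h1 _ _ Hs0.
  move=> i /HS [a Ha]; exists a; exact: I_mono h2 _ _ Ha.
Qed.

Definition oenc (o : option nat) := if o is Some y then y.+1 else 0.

Definition prodall (l : seq prog) := foldr cmul (cst 1) l.
Lemma ev_prodall O l v ws : evals O l v ws -> eval O (prodall l) v (foldr muln 1 ws).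
Proof.
elim=> [v0|g gs v0 w ws0 Hg Hgs IH] /=; first exact: (ev_cst O 1 v0).
exact: ev_cmul.
Qed.

Lemma evs_cpred O l v ws : evals O l v ws -> evals O (map cpred l) v (map predn ws).
Proof. elim=> [v0|g gs v0 w ws0 Hg Hgs IH] /=; constructor => //; exact: ev_cpred. Qed.

Definition GR Cg k' := cif (PProj 1) (cst 0)
  (PComp Cg [:: PProj 2, PProj 0, cpred (PProj 1) & projs 3 k']).
Definition GM Cf k := let H := PComp Cf (PProj 2 :: PProj 0 :: projs 3 k) in
  cif (PProj 1) (cif H (cst 1) (cif (cpred H) (csucc (csucc (PProj 0))) (cst 0))) (PProj 1).

Fixpoint Cl (p : prog) (k : nat) {struct p} : prog :=
  match p with
  | PZero => cst 1
  | PSucc => csucc (csucc (PProj 1))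
  | PProj i => csucc (PProj i.+1)
  | POracle => cst 1
  | PComp f gs => cif (prodall (map (fun g => Cl g k) gs)) (cst 0)
      (PComp (Cl f (size gs)) (PProj 0 :: map cpred (map (fun g => Cl g k) gs)))
  | PRec f g => if k is k'.+1 then
      PComp (PRec (Cl f k') (GR (Cl g k'.+2) k')) (PProj 1 :: PProj 0 :: projs 2 k')
      else cst 0
  | PMu f => cpred (PComp (PRec (cst 0) (GM (Cl f k.+1) k)) (PProj 0 :: PProj 0 :: projs 1 k))
  end.

Lemma evs_projs2 O pre ps k : size ps = k ->
  evals O (projs (size pre) k) (pre ++ ps) ps.
Proof. move=> <-; exact: evs_projs'. Qed.

Lemma allsome_map l ws : allsome l = Some ws -> l = map Some ws.
Proof.
elim: l ws => [|o l IH] ws /=; first by case=> <-.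
case: o => // a; case E: (allsome l) => [ws'|] // [<-] /=; by rewrite (IH _ E).
Qed.
Lemma allsome_none l : allsome l = None -> foldr muln 1 (map oenc l) = 0.
Proof.
elim: l => [|o l IH] //=; case: o => [a|] /=; last by rewrite ?mul0n.
case E: (allsome l) => //= _; by rewrite IH // muln0.
Qed.
Lemma foldr_succ_pos (ws : seq nat) : 0 < foldr muln 1 (map (oenc \o Some) ws).
Proof. elim: ws => //= a ws IH; by rewrite muln_gt0 IH. Qed.
Lemma map_pred_succ (ws : seq nat) : map predn (map (oenc \o Some) ws) = ws.
Proof. by elim: ws => //= a ws ->. Qed.

Lemma Cl_correct O p : forall k s v, size v = k ->
  eval O (Cl p k) (s :: v) (oenc (I s p v)).
Proof.
elim/prog_ind2: p.
- move=> k s v _ /=; exact: (ev_cst O 1 _).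
- move=> k s v _ /=; have := ev_csucc (ev_csucc (ev_proj O 1 (s :: v))).
  by case: v.
- move=> i k s v _ /=; exact: ev_csucc (ev_proj _ _ _).
- move=> k s v _ /=; exact: (ev_cst O 1 _).
- move=> f gs IHf IHgs k s v Hv /=.
  have E : evals O (map (fun g => Cl g k) gs) (s :: v) (map oenc (map (fun g => I s g v) gs)).
    elim: gs IHgs {IHf} => [|g gs IH] Hgs /=; first by constructor.
    inversion Hgs as [|g0 gs0 Hg Hgs']; subst; constructor; [exact: Hg | exact: IH].
  move: E; set lo := [seq I s g v | g <- gs] => E.
  have Hlo : size lo = size gs by rewrite size_map.
  case E2: (allsome lo) => [ws|] /=.
    have El := allsome_map E2; rewrite El in E Hlo.
    rewrite -map_comp in E; rewrite size_map in Hlo.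
    have P := foldr_succ_pos ws.
    have E3 := evs_cpred E; rewrite map_pred_succ in E3.
    have := ev_cif (ev_prodall E) (ev_cst O 0 _)
      (ev_comp (evs_cons (ev_proj O 0 (s :: v)) E3) (IHf _ s ws (erefl _))).
    rewrite Hlo.
    by case: (foldr muln 1 _) P.
  have := ev_cif (ev_prodall E) (ev_cst O 0 _)
      (ev_comp (evs_cons (ev_proj O 0 (s :: v)) (evs_cpred E)) (IHf _ s _ (erefl _))).
  by rewrite (allsome_none E2) !size_map ?Hlo.
- move=> f g IHf IHg [|k'] s [|n v] //= Hv.
  + constructor.
  + case: Hv => Hv.
    have Ha := IHf k' s v Hv.
    pose G j z := if z is 0 then 0 else oenc (I s g [:: j, z.-1 & v]).
    have HG : forall j z, eval O (GR (Cl g k'.+2) k') [:: j, z & s :: v] (G j z).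
      move=> j z; rewrite /GR /G.
      have hp := evs_projs2 O [:: j; z; s] Hv.
      have := ev_cif (ev_proj O 1 [:: j, z, s & v]) (ev_cst O 0 _)
        (ev_comp (evs_cons (ev_proj _ 2 _) (evs_cons (ev_proj _ 0 _)
           (evs_cons (ev_cpred (ev_proj _ 1 _)) hp))) (IHg k'.+2 s [:: j, z.-1 & v] _)).
      by apply; rewrite /= Hv.
    have := ev_rec n Ha HG.
    have -> : recf (oenc (I s f v)) G n =
              oenc (orec (I s f v) (fun j z => I s g [:: j, z & v]) n).
      elim: n {HG} => [|n IH] //=; rewrite IH /G.
      by case: (orec _ _ n).
    move=> H; apply: ev_comp H; constructor; first exact: ev_proj.
    constructor; first exact: ev_proj.
    exact (evs_projs2 O [:: s; n] Hv).
- move=> f IHf k s v Hv /=.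
  pose h m := I s f (m :: v).
  pose G j r := if r is 0 then
      (if oenc (h j) is 0 then 1 else if (oenc (h j)).-1 is 0 then j.+2 else 0) else r.
  have HG : forall j r, eval O (GM (Cl f k.+1) k) [:: j, r & s :: v] (G j r).
    move=> j r; rewrite /GM /G.
    have hp := evs_projs2 O [:: j; r; s] Hv.
    have HH := ev_comp (evs_cons (ev_proj O 2 [:: j, r, s & v])
       (evs_cons (ev_proj _ 0 _) hp)) (IHf k.+1 s (j :: v) (f_equal S Hv)).
    exact: ev_cif (ev_proj _ _ _) (ev_cif HH (ev_cst _ _ _)
       (ev_cif (ev_cpred HH) (ev_csucc (ev_csucc (ev_proj _ _ _))) (ev_cst _ _ _)))
       (ev_proj _ _ _).
  have := ev_rec s (ev_cst O 0 (s :: v)) HG.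
  have -> : recf 0 G s = scan h s.
    elim: (s) => [|j IH] //=; rewrite IH /G.
    case: (scan h j) => // ; by case: (h j) => [[|a]|].
  move=> H.
  have : eval O (PComp (PRec (cst 0) (GM (Cl f k.+1) k)) (PProj 0 :: PProj 0 :: projs 1 k))
     (s :: v) (scan h s).
    apply: ev_comp H; constructor; first exact: ev_proj.
    constructor; first exact: ev_proj.
    exact (evs_projs2 O [:: s] Hv).
  move/ev_cpred; rewrite /h.
  by case: (scan _ s) => [|[|m]].
Qed.

Lemma code_inj : injective CodeSeq.code.
Proof. exact: can_inj CodeSeq.codeK. Qed.

Lemma prog_code_inj : injective prog_code.
Proof.
move=> p; elim/prog_ind2: p.
- by case=> [||j||f' gs'|f' g'|f'] /code_inj.
- by case=> [||j||f' gs'|f' g'|f'] /code_inj.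
- by move=> i; case=> [||j||f' gs'|f' g'|f'] /code_inj // [->].
- by case=> [||j||f' gs'|f' g'|f'] /code_inj.
- move=> f gs IHf IHgs; case=> [||j||f' gs'|f' g'|f'] /code_inj //= [/IHf -> /code_inj E].
  congr PComp.
  elim: gs IHgs gs' E {IHf} => [|g gs IH] Hgs [|g' gs'] //= [E1 E2].
  inversion Hgs as [|g0 gs0 Hg Hgs']; subst.
  by rewrite (Hg _ E1) (IH Hgs' _ E2).
- move=> f g IHf IHg; case=> [||j||f' gs'|f' g'|f'] /code_inj //= [/IHf -> /IHg ->] //.
- move=> f IHf; case=> [||j||f' gs'|f' g'|f'] /code_inj //= [/IHf ->] //.
Qed.

Definition cons_code x c := 2 ^ x * c.*2.+1.
Definition ccons P Q := cmul (cpow2 P) (csucc (cadd Q Q)).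
Lemma ev_ccons O P Q v a b : eval O P v a -> eval O Q v b -> eval O (ccons P Q) v (cons_code a b).
Proof.
move=> hP hQ; rewrite /cons_code -addnn.
exact: ev_cmul (ev_cpow2 hP) (ev_csucc (ev_cadd hQ hQ)).
Qed.

Definition CCP := PRec (cst 1)
  (ccons (cst 4) (ccons (ccons (cst 1) (cst 0)) (ccons (ccons (PProj 1) (cst 0)) (cst 0)))).
Lemma ev_CCP O n : eval O CCP [:: n] (prog_code (cst n)).
Proof.
have -> : prog_code (cst n) = recf 1 (fun _ z =>
   cons_code 4 (cons_code (cons_code 1 0) (cons_code (cons_code z 0) 0))) n.
  by elim: n => //= n <-.
apply: ev_rec; first exact: ev_cst.
move=> j z; apply: ev_ccons; first exact: ev_cst.
apply: ev_ccons; first by apply: ev_ccons; exact: ev_cst.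
apply: ev_ccons; last exact: ev_cst.
apply: ev_ccons; [exact: ev_proj | exact: ev_cst].
Qed.

Definition Qp S a b := PComp S [:: cst a; cst b].

Definition QC cS A B := ccons (cst 4) (ccons (cst cS)
   (ccons (ccons (ap1 CCP A) (ccons (ap1 CCP B) (cst 0))) (cst 0))).
Lemma ev_QC O S A B v a b : eval O A v a -> eval O B v b ->
  eval O (QC (prog_code S) A B) v (prog_code (Qp S a b)).
Proof.
move=> hA hB.
have -> : prog_code (Qp S a b) = cons_code 4 (cons_code (prog_code S)
   (cons_code (cons_code (prog_code (cst a)) (cons_code (prog_code (cst b)) 0)) 0)) by [].
apply: ev_ccons; first exact: ev_cst.
apply: ev_ccons; first exact: ev_cst.
apply: ev_ccons; last exact: ev_cst.
apply: ev_ccons; first exact: ev_ap1 hA (ev_CCP _ _).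
apply: ev_ccons; [exact: ev_ap1 hB (ev_CCP _ _) | exact: ev_cst].
Qed.

Definition halts S a b := exists y, eval no_oracle S [:: a; b] y.

Lemma evs_csts O a b v : evals O [:: cst a; cst b] v [:: a; b].
Proof. apply: evs_cons; first exact: ev_cst. apply: evs_cons; first exact: ev_cst. constructor. Qed.

Lemma halting_Qp S a b : halting_set (prog_code (Qp S a b)) <-> halts S a b.
Proof.
split.
  move=> [p [/prog_code_inj -> [y Hy]]].
  inversion Hy as [| | | | |ff gg vv ws yy A B| | |]; subst.
  have E : ws = [:: a; b].
    apply: evals_det A (evs_csts _ _ _ _).
    by repeat constructor; move=> *; apply: eval_det; eauto.
  by subst; exists y.
move=> [y Hy]; exists (Qp S a b); split => //; exists y.
exact: ev_comp (evs_csts _ _ _ _) Hy.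
Qed.

Definition QRY S A B := ap1 POracle (QC (prog_code S) A B).
Lemma ev_QRY S A B v a b : eval halting_set A v a -> eval halting_set B v b ->
  (halts S a b -> eval halting_set (QRY S A B) v 1) /\
  (~ halts S a b -> eval halting_set (QRY S A B) v 0).
Proof.
move=> hA hB; have hQ := ev_QC S hA hB.
split=> H; apply: ev_ap1 hQ _.
  by constructor; apply/halting_Qp.
by constructor => /= /halting_Qp.
Qed.

Lemma ev_PMu_iff O F v (fv : nat -> nat) : (forall j, eval O F (j :: v) (fv j)) ->
  forall y, eval O (PMu F) v y <-> (fv y = 0 /\ forall m, m < y -> fv m <> 0).
Proof.
move=> hF y; split.
  move=> H; inversion H as [| | | | | | | | ff vv n A1 B1]; subst.
  split; first by rewrite (eval_det (hF y) A1).
  move=> m /B1 [k [Hk Ek]]; rewrite (eval_det (hF m) Ek); move: Hk; by case: (k).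
move=> [H1 H2]; constructor; first by rewrite -H1.
move=> m /H2 Hm; exists (fv m); split; last exact: hF.
by case: (fv m) Hm.
Qed.

Lemma ev_PMu_halts O F v (fv : nat -> nat) : (forall j, eval O F (j :: v) (fv j)) ->
  (exists y, eval O (PMu F) v y) <-> exists j, fv j = 0.
Proof.
move=> hF; split.
  by move=> [y /(ev_PMu_iff hF) [H _]]; exists y.
move=> Hex.
have Hex' : exists j, fv j == 0 by case: Hex => j Hj; exists j; apply/eqP.
exists (ex_minn Hex'); apply/(ev_PMu_iff hF).
case: ex_minnP => m /eqP Hm Hmin; split => // i Hi /eqP Hi0.
by have := Hmin i Hi0; rewrite leqNgt Hi.
Qed.

Definition cnz P := cisz (cisz P).
Lemma ev_cnz O P v a : eval O P v a -> eval O (cnz P) v (a != 0).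
Proof. move=> h; have := ev_cisz (ev_cisz h); by case: (a). Qed.

Fixpoint bor (tv : nat -> nat) j : bool :=
  if j is j'.+1 then bor tv j' || (tv j != 0) else tv 0 != 0.
Lemma borP tv j : bor tv j <-> exists i, i <= j /\ tv i != 0.
Proof.
elim: j => [|j IH] /=.
  split; first by move=> H; exists 0.
  by move=> [[|i] [Hi H]].
split.
  move/orP=> [/IH [i [Hi H]]|H]; last by exists j.+1.
  exists i; split => //; exact: leqW.
move=> [i [Hi H]]; apply/orP; move: Hi; rewrite leq_eqVlt => /orP [/eqP Ei|Hi].
  by right; rewrite -Ei.
by left; apply/IH; exists i.
Qed.

Definition BOR T k := PRec (cnz (PComp T (cst 0 :: projs 0 k)))
  (cif (PProj 1) (cnz (PComp T (csucc (PProj 0) :: projs 2 k))) (cst 1)).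

Lemma ev_BOR O T k ps (tv : nat -> nat) : size ps = k ->
  (forall i, eval O T (i :: ps) (tv i)) ->
  forall top, eval O (BOR T k) (top :: ps) (bor tv top).
Proof.
move=> Hk hT top.
have -> : nat_of_bool (bor tv top) =
   recf (tv 0 != 0) (fun j r => if r is 0 then nat_of_bool (tv j.+1 != 0) else 1) top.
  elim: top => //= j <-; by case: (bor tv j).
apply: ev_rec.
  apply: ev_cnz; apply: ev_comp (hT 0); constructor; first exact: ev_cst.
  exact (evs_projs2 O [::] Hk).
move=> j z; apply: ev_cif; [exact: ev_proj| |exact: ev_cst].
apply: ev_cnz; apply: ev_comp (hT j.+1); constructor; first exact: ev_csucc (ev_proj _ _ _).
exact (evs_projs2 O [:: j; z] Hk).
Qed.

Definition Search T k :=
  PMu (cisz (PComp (BOR T k.+1) (PProj 0 :: PProj 0 :: projs 1 k))).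

Lemma Search_halts O T k ps (tv : nat -> nat -> nat) : size ps = k ->
  (forall t s, eval O T [:: t, s & ps] (tv t s)) ->
  ((exists y, eval O (Search T k) ps y) <-> exists j t, t <= j /\ tv t j != 0).
Proof.
move=> Hk hT.
have hF : forall j, eval O (cisz (PComp (BOR T k.+1) (PProj 0 :: PProj 0 :: projs 1 k)))
     (j :: ps) (nat_of_bool (bor (fun t => tv t j) j) == 0).
  move=> j; apply: ev_cisz; apply: ev_comp; last first.
    apply: (@ev_BOR O T k.+1 (j :: ps)); first by rewrite /= Hk.
    move=> i; exact: hT.
  constructor; first exact: ev_proj.
  constructor; first exact: ev_proj.
  exact (evs_projs2 O [:: j] Hk).
rewrite (ev_PMu_halts hF); split.
  move=> [j Hj]; exists j; apply/borP; by case: (bor _ j) Hj.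
by move=> [j /borP Hj]; exists j; rewrite Hj.
Qed.

Definition pb (P : Prop) : bool := if excluded_middle_informative P then true else false.
Lemma pbP (P : Prop) : pb P <-> P.
Proof. rewrite /pb; by case: excluded_middle_informative. Qed.

Lemma ev_QRY' S A B v a b : eval halting_set A v a -> eval halting_set B v b ->
  eval halting_set (QRY S A B) v (pb (halts S a b)).
Proof.
move=> hA hB; have [H1 H0] := ev_QRY S hA hB.
rewrite /pb; case: excluded_middle_informative => H; [exact: H1 | exact: H0].
Qed.

Fixpoint vals (D : Type) (g : nat -> option D) n : seq D :=
  if n is k.+1 then (if g k is Some d then d :: vals g k else vals g k) else [::].
Lemma vals_in (D : Type) (g : nat -> option D) n t d : t < n -> g t = Some d -> List.In d (vals g n).
Proof.
elim: n => [|n IH] //; rewrite ltnS leq_eqVlt => /orP [/eqP ->|Ht] Hg /=.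
  by rewrite Hg; left.
case: (g n) => [d'|]; last exact: IH.
right; exact: IH.
Qed.

Lemma max_char (A D : Type) (lt : D -> D -> Prop) (f : A -> nat -> option D) x d :
  (forall d, ~ lt d d) -> (forall a b c, lt a b -> lt b c -> lt a c) -> mono_inc lt f ->
  max_graph lt f x d <-> ((exists t, f x t = Some d) /\ ~ exists t d', f x t = Some d' /\ lt d d').
Proof.
move=> irr tr mono; split.
  move=> [_ [Ht Hle]]; split => // -[t [d' [Hf Hlt]]].
  case: (Hle _ _ Hf) => [E|Hl]; first by subst; exact: irr Hlt.
  exact: irr (tr _ _ _ Hlt Hl).
move=> [[t0 Ht0] Hn].
have Hle : forall t d', f x t = Some d' -> le_of lt d' d.
  move=> t d' Hf; case: (leqP t0 t) => Htt.
    case: (mono _ _ _ _ _ Htt Ht0 Hf) => [E|Hl]; first by left.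
    by exfalso; apply: Hn; exists t, d'.
  exact: mono _ _ _ _ _ (ltnW Htt) Hf Ht0.
split; last by split => //; exists t0.
exists (d :: vals (f x) t0) => t d' Hf.
case: (leqP t0 t) => Htt; last by right; exact: vals_in Htt Hf.
left; case: (mono _ _ _ _ _ Htt Ht0 Hf) => [->//|Hl].
by exfalso; apply: Hn; exists t, d'.
Qed.

Lemma max_uniq (A D : Type) (lt : D -> D -> Prop) (f : A -> nat -> option D) x d1 d2 :
  (forall d, ~ lt d d) -> (forall a b c, lt a b -> lt b c -> lt a c) ->
  max_graph lt f x d1 -> max_graph lt f x d2 -> d1 = d2.
Proof.
move=> irr tr [_ [[t1 H1] L1]] [_ [[t2 H2] L2]].
case: (L2 _ _ H1) => // l12; case: (L1 _ _ H2) => // l21.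
by case: (irr _ (tr _ _ _ l12 l21)).
Qed.

Lemma out_from_W (A D : Type) (rho : nat -> D) (rhoinv : D -> nat) (encA : A -> nat)
  (G : A -> D -> Prop) W (wf : A -> nat -> nat) :
  cancel rho rhoinv -> cancel rhoinv rho ->
  (forall x m, eval halting_set W [:: m; encA x] (wf x m)) ->
  (forall x m, wf x m = 0 <-> G x (rho m)) ->
  (forall x d1 d2, G x d1 -> G x d2 -> d1 = d2) ->
  pc_rel halting_set encA rhoinv G.
Proof.
move=> c1 c2 hW hG hU; exists (PMu W); split; last by move=> a m _; exists (rho m); rewrite c1.
move=> x d; rewrite (ev_PMu_iff (fv := wf x) (fun j => hW x j)); split.
  by move=> [/hG]; rewrite c2.
move=> Hd; split; first by apply/hG; rewrite c2.
move=> m Hm /hG Hm'; have E := hU _ _ _ Hm' Hd.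
by move: Hm; rewrite -E c1 ltnn.
Qed.

Definition PCP A B := ccons A (ccons B (cst 0)).
Definition Rp p := PComp (Cl p 1) [:: PProj 1; PCP (PProj 2) (PProj 0)].
Definition TA p := ceq (Rp p) (csucc (PProj 3)).
Definition TB p L := cmul (cnz (Rp p))
  (ceq (PComp (Cl L 2) [:: PProj 1; PProj 3; cpred (Rp p)]) (cst 2)).
Definition SA p := Search (TA p) 2.
Definition SB p L := Search (TB p L) 2.
Definition WMAX p L := cif (QRY (SA p) (PProj 1) (PProj 0)) (cst 1)
   (cif (QRY (SB p L) (PProj 1) (PProj 0)) (cst 0) (cst 1)).

Lemma ev_Rp O p t s nx m :
  eval O (Rp p) [:: t; s; nx; m] (oenc (I s p [:: cons_code nx (cons_code t 0)])).
Proof.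
apply: ev_comp (@Cl_correct O p 1 s [:: cons_code nx (cons_code t 0)] (erefl _)).
constructor; first exact: ev_proj.
constructor; last constructor.
apply: ev_ccons; first exact: ev_proj.
apply: ev_ccons; [exact: ev_proj | exact: ev_cst].
Qed.

Lemma I_eval_max s1 s2 p1 p2 v1 v2 y1 y2 : I s1 p1 v1 = Some y1 -> I s2 p2 v2 = Some y2 ->
  I (maxn s1 s2) p1 v1 = Some y1 /\ I (maxn s1 s2) p2 v2 = Some y2.
Proof.
move=> H1 H2; split; [exact: I_mono (leq_maxl _ _) _ _ H1 | exact: I_mono (leq_maxr _ _) _ _ H2].
Qed.

Lemma haltsA (X : bspace) (D : Type) (rho : nat -> D) (rhoinv : D -> nat)
  (f : bs_type X -> nat -> option D) p x m :
  cancel rho rhoinv ->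
  (forall x t d, eval no_oracle p [:: pair_code (x, t)] (rhoinv d) <-> f x t = Some d) ->
  halts (SA p) (bs_code x) m <-> exists t, f x t = Some (rho m).
Proof.
move=> c1 hp; rewrite /halts.
rewrite (@Search_halts no_oracle (TA p) 2 [:: bs_code x; m]
   (fun t s => oenc (I s p [:: cons_code (bs_code x) (cons_code t 0)]) == m.+1)) //; last first.
  move=> t s; exact: ev_ceq (ev_Rp _ _ _ _ _ _) (ev_csucc (ev_proj _ _ _)).
split.
  move=> [j [t [_]]].
  case E: (I j p _) => [y|] //=; rewrite eqSS => H.
  have Ey : y = m by move: H; case: (y =P m).
  subst y; exists t.
  by apply/hp; rewrite c1; exact: I_sound E.
move=> [t Ht]; move/hp: Ht; rewrite c1 => /I_complete [s Hs].
exists (maxn s t), t; split; first exact: leq_maxr.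
have Hs' : I s p [:: cons_code (bs_code x) (cons_code t 0)] = Some m := Hs.
by rewrite (I_mono (leq_maxl _ _) Hs') /= eqxx.
Qed.

Lemma haltsB (X : bspace) (D : Type) (lt : D -> D -> Prop) (rho : nat -> D) (rhoinv : D -> nat)
  (f : bs_type X -> nat -> option D) p L x m :
  cancel rho rhoinv -> cancel rhoinv rho ->
  (forall m n, eval no_oracle L [:: m; n] 1 <-> lt (rho m) (rho n)) ->
  (forall x t d, eval no_oracle p [:: pair_code (x, t)] (rhoinv d) <-> f x t = Some d) ->
  halts (SB p L) (bs_code x) m <-> exists t d', f x t = Some d' /\ lt (rho m) d'.
Proof.
move=> c1 c2 hL hp; rewrite /halts.
rewrite (@Search_halts no_oracle (TB p L) 2 [:: bs_code x; m]
   (fun t s => let r := oenc (I s p [:: cons_code (bs_code x) (cons_code t 0)]) in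
       (r != 0) * (oenc (I s L [:: m; r.-1]) == 2))) //; last first.
  move=> t s; apply: ev_cmul; first exact: ev_cnz (ev_Rp _ _ _ _ _ _).
  apply: ev_ceq; last exact: ev_cst.
  apply: ev_comp (@Cl_correct _ L 2 s [:: m; _] (erefl _)).
  constructor; first exact: ev_proj.
  constructor; first exact: ev_proj.
  constructor; [exact: ev_cpred (ev_Rp _ _ _ _ _ _)|constructor].
split.
  move=> [j [t [_ /=]]].
  case E: (I j p _) => [y|] //=.
  case E2: (I j L _) => [[|[|z]]|] //= _.
  exists t, (rho y); split.
    by apply/hp; rewrite c1; exact: I_sound E.
  by apply/hL; exact: I_sound E2.
move=> [t [d' [Ht Hl]]].
move/hp: Ht => /I_complete [s1 Hs1].
have Hs1' : I s1 p [:: cons_code (bs_code x) (cons_code t 0)] = Some (rhoinv d') := Hs1.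
have : eval no_oracle L [:: m; rhoinv d'] 1 by apply/hL; rewrite c2.
move=> /I_complete [s2 Hs2].
have [H1 H2] := I_eval_max Hs1' Hs2.
exists (maxn (maxn s1 s2) t), t; split; first exact: leq_maxr.
by rewrite /= (I_mono (leq_maxl _ _) H1) /= (I_mono (leq_maxl _ _) H2).
Qed.

Lemma pbR (P : Prop) : reflect P (pb P).
Proof. rewrite /pb; case: excluded_middle_informative => H; by constructor. Qed.

Lemma max_W (X : bspace) (D : Type) (lt : D -> D -> Prop) (rho : nat -> D) (rhoinv : D -> nat)
  (f : bs_type X -> nat -> option D) p L :
  cancel rho rhoinv -> cancel rhoinv rho ->
  (forall d, ~ lt d d) -> (forall a b c, lt a b -> lt b c -> lt a c) -> mono_inc lt f ->
  (forall m n, eval no_oracle L [:: m; n] 1 <-> lt (rho m) (rho n)) ->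
  (forall x t d, eval no_oracle p [:: pair_code (x, t)] (rhoinv d) <-> f x t = Some d) ->
  exists W (wf : bs_type X -> nat -> nat), forall x m,
    eval halting_set W [:: m; bs_code x] (wf x m) /\ (wf x m = 0 <-> max_graph lt f x (rho m)).
Proof.
move=> c1 c2 irr tr mono hL hp.
exists (WMAX p L).
exists (fun x m => if pb (halts (SA p) (bs_code x) m) then
                    (if pb (halts (SB p L) (bs_code x) m) then 1 else 0) else 1).
move=> x m; split.
  have hA := ev_QRY' (SA p) (ev_proj halting_set 1 [:: m; bs_code x]) (ev_proj _ 0 _).
  have hB := ev_QRY' (SB p L) (ev_proj halting_set 1 [:: m; bs_code x]) (ev_proj _ 0 _).
  have := ev_cif hA (ev_cst _ 1 _) (ev_cif hB (ev_cst _ 0 _) (ev_cst _ 1 _)).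
  by case: (pb _); case: (pb _).
rewrite (max_char _ _ irr tr mono) -(haltsA x m c1 hp) -(haltsB x m c1 c2 hL hp).
case: (pbR (halts (SA p) (bs_code x) m)) => HA; case: (pbR (halts (SB p L) (bs_code x) m)) => HB; split => //; by case.
Qed.

Lemma pc_rel_ext O (A B : Type) (eA : A -> nat) (eB : B -> nat) (F G : A -> B -> Prop) :
  (forall a b, F a b <-> G a b) -> pc_rel O eA eB F -> pc_rel O eA eB G.
Proof. move=> H [p [H1 H2]]; exists p; split => // a b; rewrite -H; exact: H1. Qed.

Lemma part1_max (X : bspace) (D : Type) (lt : D -> D -> Prop) (rho : nat -> D) (rhoinv : D -> nat)
  (f : bs_type X -> nat -> option D) L :
  cancel rho rhoinv -> cancel rhoinv rho ->
  (forall d, ~ lt d d) -> (forall a b c, lt a b -> lt b c -> lt a c) ->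
  (forall m n, eval no_oracle L [:: m; n] 1 <-> lt (rho m) (rho n)) ->
  pc_fun2 rhoinv f -> mono_inc lt f ->
  exists W (wf : bs_type X -> nat -> nat), forall x m,
    eval halting_set W [:: m; bs_code x] (wf x m) /\ (wf x m = 0 <-> max_graph lt f x (rho m)).
Proof.
move=> c1 c2 irr tr hL [p [hp _]] mono.
apply: max_W c1 c2 irr tr mono hL _ => x t d; exact: (hp (x, t) d).
Qed.

Lemma part1_max_pc (X : bspace) (D : Type) (lt : D -> D -> Prop) (rho : nat -> D) (rhoinv : D -> nat)
  (f : bs_type X -> nat -> option D) L :
  cancel rho rhoinv -> cancel rhoinv rho ->
  (forall d, ~ lt d d) -> (forall a b c, lt a b -> lt b c -> lt a c) ->
  (forall m n, eval no_oracle L [:: m; n] 1 <-> lt (rho m) (rho n)) ->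
  pc_fun2 rhoinv f -> mono_inc lt f ->
  pc_rel halting_set (@bs_code X) rhoinv (max_graph lt f).
Proof.
move=> c1 c2 irr tr hL hf mono.
have [W [wf H]] := part1_max c1 c2 irr tr hL hf mono.
apply: (out_from_W (W := W) (wf := wf)) c1 c2 _ _ _.
- by move=> x m; case: (H x m).
- by move=> x m; case: (H x m).
- move=> x d1 d2; exact: max_uniq irr tr.
Qed.

Lemma ev_swap O L m n y : eval O (PComp L [:: PProj 1; PProj 0]) [:: m; n] y <-> eval O L [:: n; m] y.
Proof.
split.
  move=> H; inversion H as [| | | | |ff gg vv ws yy A B| | |]; subst.
  have E : ws = [:: n; m].
    apply: evals_det A _; last by repeat constructor.
    by repeat constructor; move=> *; apply: eval_det; eauto.
  by subst.
move=> H; apply: ev_comp H; repeat constructor.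
Qed.

Lemma le_of_flip (D : Type) (lt : D -> D -> Prop) a b : le_of lt a b <-> le_of (fun x y => lt y x) b a.
Proof. by split => -[->|H]; [left|right|left|right]. Qed.

Fixpoint wl n i : seq nat := if n is k.+1 then nat_of_bool (odd (iter k half i)) :: wl k i else [::].
Fixpoint wstr n i : seq 'I_2 := if n is k.+1 then inord (odd (iter k half i)) :: wstr k i else [::].

Lemma size_wstr n i : size (wstr n i) = n.
Proof. by elim: n => //= n ->. Qed.

Lemma bs_code_wstr n i : bs_code (X := bits) (wstr n i) = cons_code (CodeSeq.code (wl n i)) 0.
Proof.
rewrite /bs_code /=; congr (2 ^ _ * _).
congr CodeSeq.code; elim: n => //= n ->; by rewrite inordK // ltnS leq_b1.
Qed.

Definition ODDP := PRec PZero (cisz (PProj 1)).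
Lemma ev_ODDP O a : eval O ODDP [:: a] (odd a).
Proof.
have -> : nat_of_bool (odd a) = recf 0 (fun _ z => nat_of_bool (z == 0)) a.
  by elim: a => //= a <-; case: (odd a).
apply: ev_rec; first constructor.
move=> j z; exact: ev_cisz (ev_proj _ _ _).
Qed.

Definition HALFP := PRec PZero (cadd (PProj 1) (PComp ODDP [:: PProj 0])).
Lemma ev_HALFP O a : eval O HALFP [:: a] a./2.
Proof.
have -> : a./2 = recf 0 (fun j z => z + odd j) a.
  elim: a => //= a <-; by rewrite uphalf_half addnC.
apply: ev_rec; first constructor.
move=> j z; apply: ev_cadd; first exact: ev_proj.
apply: ev_comp (ev_ODDP _ _); repeat constructor.
Qed.

Definition HP := PRec (PProj 0) (PComp HALFP [:: PProj 1]).
Lemma ev_HP O k i : eval O HP [:: k; i] (iter k half i).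
Proof.
have -> : iter k half i = recf i (fun _ z => z./2) k by elim: k => //= k ->.
apply: ev_rec; first exact: ev_proj.
move=> j z; apply: ev_comp (ev_HALFP _ _); repeat constructor.
Qed.

Definition GBP := PRec (cst 0) (ccons (PComp ODDP [:: PComp HP [:: PProj 0; PProj 2]]) (PProj 1)).
Lemma ev_GBP O n i : eval O GBP [:: n; i] (CodeSeq.code (wl n i)).
Proof.
have -> : CodeSeq.code (wl n i) = recf 0 (fun k z => cons_code (odd (iter k half i)) z) n.
  by elim: n => //= n <-.
apply: ev_rec; first exact: ev_cst.
move=> j z; apply: ev_ccons; last exact: ev_proj.
apply: ev_comp (ev_ODDP _ _); constructor; last constructor.
apply: ev_comp (ev_HP _ _ _); repeat constructor.
Qed.

Definition BSC A B := ccons (PComp GBP [:: A; B]) (cst 0).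
Lemma ev_BSC O A B v n i : eval O A v n -> eval O B v i ->
  eval O (BSC A B) v (bs_code (X := bits) (wstr n i)).
Proof.
move=> hA hB; rewrite bs_code_wstr; apply: ev_ccons; last exact: ev_cst.
apply: ev_comp (ev_GBP _ _ _); constructor => //; constructor => //; constructor.
Qed.

Lemma halfDD c i : (c.*2 + i)./2 = c + i./2.
Proof.
by rewrite -{1}(odd_double_half i) addnCA -doubleD half_bit_double.
Qed.

Lemma iter_half k a i : iter k half (a * 2 ^ k + i) = a + iter k half i.
Proof.
elim: k a i => [|k IH] a i; first by rewrite /= expn0 muln1.
rewrite !iterSr expnS mulnCA mul2n halfDD IH; by [].
Qed.

Lemma iter_half_small k i : i < 2 ^ k -> iter k half i = 0.
Proof.
elim: k i => [|k IH] i; first by case: i.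
rewrite iterSr expnS mul2n => Hi; apply: IH.
by rewrite -ltn_double -[i]odd_double_half in Hi *; move: Hi; case: (odd i) => /=; lia.
Qed.

Lemma wstr_ext k i1 i2 : (forall j, j < k -> odd (iter j half i1) = odd (iter j half i2)) ->
  wstr k i1 = wstr k i2.
Proof.
elim: k => //= k IH H; rewrite H // IH // => j Hj; apply: H; exact: ltnW.
Qed.

Lemma wstr_surj (w : seq 'I_2) : exists i, i < 2 ^ size w /\ wstr (size w) i = w.
Proof.
elim: w => [|b w [i' [Hi' Ew]]]; first by exists 0.
exists (b * 2 ^ size w + i'); split.
  rewrite /= expnS; have := ltn_ord b; nia.
rewrite /= iter_half iter_half_small // addn0.
congr cons.
  apply: val_inj; rewrite /= inordK; last by rewrite ltnS leq_b1.
  by case: b => [[|[|m]] Hm].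
apply: eq_trans Ew; apply: wstr_ext => j Hj.
have -> : b * 2 ^ size w = (b * 2 ^ (size w - j)) * 2 ^ j.
  by rewrite -mulnA -expnD subnK // ltnW.
rewrite iter_half oddD oddM oddX.
have -> : (size w - j == 0) = false by apply/eqP; lia.
by rewrite /= andbF.

Qed.

Lemma K_from_W (D : Type) (rho : nat -> D) (rhoinv : D -> nat)
  (phi : bs_type bits -> D -> Prop) W (wf : nat -> nat -> nat) :
  cancel rho rhoinv -> cancel rhoinv rho ->
  (forall m n, eval halting_set W [:: n; m] (wf m n)) ->
  (forall m n, wf m n = 0 <-> exists w, size w = n /\ phi w (rho m)) ->
  pc_rel halting_set rhoinv id (K_graph phi).
Proof.
move=> c1 c2 hW hG; exists (PMu W); split; last by move=> a m _; exists m.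
move=> d n; rewrite (ev_PMu_iff (fv := wf (rhoinv d)) (fun j => hW (rhoinv d) j)).
rewrite hG c2; split.
  move=> [[w [Hs Hp]] Hmin]; split; first by exists w.
  move=> p Hp'; rewrite leqNgt; apply/negP => Hlt.
  by apply: (Hmin _ Hlt); apply/hG; rewrite c2; exists p.
move=> [[p [Hs Hp]] Hle]; split; first by exists p.
move=> m Hm /hG; rewrite c2 => -[w [Hw Hw']].
by have := Hle _ Hw'; rewrite Hw leqNgt Hm.
Qed.

Definition TE pf := ceq (PComp (Cl pf 1) [:: PProj 1; BSC (PProj 2) (PProj 0)]) (csucc (PProj 3)).
Definition SE pf := Search (TE pf) 2.

Lemma haltsE (D : Type) (rho : nat -> D) (rhoinv : D -> nat)
  (phi : bs_type bits -> D -> Prop) pf n m :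
  cancel rho rhoinv ->
  (forall w d, eval no_oracle pf [:: bs_code w] (rhoinv d) <-> phi w d) ->
  halts (SE pf) n m <-> exists w, size w = n /\ phi w (rho m).
Proof.
move=> c1 hp; rewrite /halts.
rewrite (@Search_halts no_oracle (TE pf) 2 [:: n; m]
   (fun i s => oenc (I s pf [:: bs_code (X := bits) (wstr n i)]) == m.+1)) //; last first.
  move=> i s; apply: ev_ceq; last exact: ev_csucc (ev_proj _ _ _).
  apply: ev_comp (@Cl_correct _ pf 1 s [:: _] (erefl _)).
  constructor; first exact: ev_proj.
  constructor; last constructor.
  apply: ev_BSC; exact: ev_proj.
split.
  move=> [j [i [_]]].
  case E: (I j pf _) => [y|] //=; rewrite eqSS => H.
  have Ey : y = m by move: H; case: (y =P m).
  subst y; exists (wstr n i); split; first exact: size_wstr.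
  by apply/hp; rewrite c1; exact: I_sound E.
move=> [w [Hs Hw]]; have [i [_ Ei]] := wstr_surj w.
move/hp: Hw; rewrite c1 -Ei Hs => /I_complete [s Hs'].
exists (maxn s i), i; split; first exact: leq_maxr.
by rewrite (I_mono (leq_maxl _ _) Hs') /= eqxx.
Qed.

Lemma K_PC (D : Type) (rho : nat -> D) (rhoinv : D -> nat) (phi : bs_type bits -> D -> Prop) :
  cancel rho rhoinv -> cancel rhoinv rho ->
  PC_bits rhoinv phi -> pc_rel halting_set rhoinv id (K_graph phi).
Proof.
move=> c1 c2 [pf [hp _]].
eapply (K_from_W (W := cisz (QRY (SE pf) (PProj 0) (PProj 1)))
   (wf := fun m n => nat_of_bool (nat_of_bool (pb (halts (SE pf) n m)) == 0)) c1 c2).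
  move=> m n; apply: ev_cisz; apply: ev_QRY'; exact: ev_proj.
move=> m n; rewrite -(haltsE n m c1 hp).
by case: (pbR (halts (SE pf) n m)) => H; split.
Qed.

Lemma K_max (D : Type) (lt : D -> D -> Prop) (rho : nat -> D) (rhoinv : D -> nat) L
  (U : bs_type bits -> D -> Prop) :
  cancel rho rhoinv -> cancel rhoinv rho ->
  (forall d, ~ lt d d) -> (forall a b c, lt a b -> lt b c -> lt a c) ->
  (forall m n, eval no_oracle L [:: m; n] 1 <-> lt (rho m) (rho n)) ->
  in_MaxPR lt rhoinv U -> pc_rel halting_set rhoinv id (K_graph U).
Proof.
move=> c1 c2 irr tr hL [f [hf [mono hU]]].
have [W0 [wf0 H0]] := part1_max c1 c2 irr tr hL hf mono.
pose T2 := cisz (PComp W0 [:: PProj 2; BSC (PProj 1) (PProj 0)]).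
pose tv n m i := nat_of_bool (wf0 (wstr n i) m == 0).
have hT : forall n m i, eval halting_set T2 [:: i; n; m] (tv n m i).
  move=> n m i; apply: ev_cisz; apply: ev_comp (proj1 (H0 _ _)).
  constructor; first exact: ev_proj.
  constructor; last constructor.
  apply: ev_BSC; exact: ev_proj.
eapply (K_from_W (W := cisz (PComp (BOR T2 2) [:: cpow2 (PProj 0); PProj 0; PProj 1]))
   (wf := fun m n => nat_of_bool (nat_of_bool (bor (tv n m) (2 ^ n)) == 0)) c1 c2).
  move=> m n; apply: ev_cisz; apply: ev_comp (ev_BOR (ps := [:: n; m]) (erefl _) (hT n m) _).
  constructor; first exact: ev_cpow2 (ev_proj _ _ _).
  constructor; first exact: ev_proj.
  constructor; [exact: ev_proj | constructor].
move=> m n.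
have -> : (nat_of_bool (nat_of_bool (bor (tv n m) (2 ^ n)) == 0) = 0) <-> bor (tv n m) (2 ^ n).
  by case: (bor _ _).
rewrite borP; split.
  move=> [i [_ Hi]]; exists (wstr n i); split; first exact: size_wstr.
  apply/hU; apply/(proj2 (H0 _ _)); move: Hi; rewrite /tv; by case: (wf0 (wstr n i) m =P 0).
move=> [w [Hs /hU Hw]]; have [i [Hi Ei]] := wstr_surj w.
exists i; split; first by rewrite -Hs ltnW.
rewrite /tv -Hs Ei; by have -> : wf0 w m = 0 by apply/(proj2 (H0 _ _)).
Qed.

Lemma min_max_graph (A D : Type) (lt : D -> D -> Prop) (f : A -> nat -> option D) x d :
  min_graph lt f x d <-> max_graph (fun a b => lt b a) f x d.
Proof.
split; move=> [H1 [H2 H3]]; split => //; split => // t d' /H3; by rewrite le_of_flip.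
Qed.

Lemma mono_flip (A D : Type) (lt : D -> D -> Prop) (f : A -> nat -> option D) :
  mono_dec lt f -> mono_inc (fun a b => lt b a) f.
Proof. move=> H x t t' d d' Htt E E'; rewrite -le_of_flip; exact: H Htt E E'. Qed.

Theorem mainTheorem13 (X : bspace) (D : Type) (lt : D -> D -> Prop)
    (rho : nat -> D) (rhoinv : D -> nat) :
  computable_poset lt rho rhoinv ->
  (* 1. Max_PR and Min_PR functions are partial computable in emptyset' *)
  (forall f : bs_type X -> nat -> option D,
     pc_fun2 rhoinv f -> mono_inc lt f ->
     pc_rel halting_set (@bs_code X) rhoinv (max_graph lt f)) /\
  (forall f : bs_type X -> nat -> option D,
     pc_fun2 rhoinv f -> mono_dec lt f ->
     pc_rel halting_set (@bs_code X) rhoinv (min_graph lt f)) /\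
  (* ... in particular K^D is computable in emptyset' *)
  (forall phi : bs_type bits -> D -> Prop,
     PC_bits rhoinv phi -> optimal_in (PC_bits rhoinv) phi ->
     pc_rel halting_set rhoinv id (K_graph phi)) /\
  (* 2. K^D_max and K^D_min are computable in emptyset' *)
  (forall U : bs_type bits -> D -> Prop,
     in_MaxPR lt rhoinv U -> optimal_in (in_MaxPR lt rhoinv) U ->
     pc_rel halting_set rhoinv id (K_graph U)) /\
  (forall U : bs_type bits -> D -> Prop,
     in_MinPR lt rhoinv U -> optimal_in (in_MinPR lt rhoinv) U ->
     pc_rel halting_set rhoinv id (K_graph U)).
Proof.
move=> [c1 c2 irr tr [L HL]].
have hL : forall m n, eval no_oracle L [:: m; n] 1 <-> lt (rho m) (rho n) by move=> m n; exact: (HL m n).1.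
pose lt' := fun a b => lt b a.
have irr' : forall d, ~ lt' d d by move=> d; exact: irr.
have tr' : forall a b c, lt' a b -> lt' b c -> lt' a c.
  move=> a b c H1 H2; exact: tr H2 H1.
have hL' : forall m n, eval no_oracle (PComp L [:: PProj 1; PProj 0]) [:: m; n] 1 <-> lt' (rho m) (rho n).
  move=> m n; rewrite ev_swap; exact: hL.
split; first by move=> f hf mono; exact: part1_max_pc c1 c2 irr tr hL hf mono.
split.
  move=> f hf mono; apply: pc_rel_ext (fun x d => iff_sym (min_max_graph lt f x d)) _.
  exact: part1_max_pc c1 c2 irr' tr' hL' hf (mono_flip mono).
split; first by move=> phi hphi _; exact: K_PC c1 c2 hphi.
split; first by move=> U hU _; exact: K_max c1 c2 irr tr hL hU.
move=> U [f [hf [mono hU]]] _.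
apply: K_max c1 c2 irr' tr' hL' _.
exists f; split => //; split; first exact: mono_flip.
move=> x d; rewrite hU; exact: min_max_graph.
Qed.
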